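(* Let $U$ be a fixed finite set and let $S\subseteq V\subseteq U$ be random sets such that $\Pr[I\in S\mid I\in V]\ge p>2/3$ for all $I\in U$. Suppose $(V,E)$ is a (random) graph on vertex set $V$ consisting of $k$ connected components, each of which is a cycle or a path. Then \[ \mathbb{E}[|V|]\le\frac{2\mathbb{E}[k]+\mathbb{E}[|T^S|]}{3p-2}. \]
   Context: For a graph $(V,E)$ and $S\subseteq V$, $T^S$ denotes the set of vertices $v\in S$ having at least $2$ neighbors in $S$. *)

(* Defs.v *)
From mathcomp Require Import all_boot all_order all_algebra.
Set Implicit Arguments. Unset Strict Implicit. Unset Printing Implicit Defensive.
Import Order.TTheory GRing.Theory Num.Theory.

(* A (simple) graph (V,E) on a vertex set V : {set U} is given by a relation
   e : rel U which is irreflexive, symmetric and only relates vertices of V. *)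
Section Graphs.
Variable U : finType.

Definition is_graph_on (V : {set U}) (e : rel U) : Prop :=
  [/\ irreflexive e, symmetric e & forall x y, e x y -> (x \in V) && (y \in V)].

Definition components (V : {set U}) (e : rel U) : {set {set U}} :=
  [set [set y in V | connect e x y] | x in V].

Definition ncomp (V : {set U}) (e : rel U) : nat := #|components V e|.

Definition consec (s : seq U) (x y : U) : bool :=
  has (fun i => ((nth x s i == x) && (nth x s i.+1 == y))
             || ((nth x s i == y) && (nth x s i.+1 == x)))
      (iota 0 (size s).-1).

Definition is_path_comp (e : rel U) (C : {set U}) : Prop :=
  exists s : seq U, [/\ uniq s, C = [set x in s] &
    {in C &, forall x y, e x y = consec s x y}].

Definition is_cycle_comp (e : rel U) (C : {set U}) : Prop :=
  exists s : seq U, [/\ uniq s, 3 <= size s, C = [set x in s] &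
    {in C &, forall x y, e x y = consec (rcons s (head x s)) x y}].

Definition TS (S : {set U}) (e : rel U) : {set U} :=
  [set v in S | 2 <= #|[set u in S | e v u]|].
End Graphs.

(* Finite probability space: sample space Om with probability mass P. *)
Section Prob.
Local Open Scope ring_scope.
Variables (R : realFieldType) (Om : finType).
Definition is_prob (P : Om -> R) : Prop :=
  (forall w, 0 <= P w) /\ \sum_w P w = 1.
Definition Pr (P : Om -> R) (A : pred Om) : R := \sum_(w | A w) P w.
Definition Ex (P : Om -> R) (X : Om -> R) : R := \sum_w P w * X w.
End Prob.

(* Main.v *)
Require Import Defs.
From mathcomp Require Import all_boot all_order all_algebra.
From mathcomp Require Import zify ring lra.
Import Order.TTheory GRing.Theory Num.Theory.
Set Implicit Arguments. Unset Strict Implicit. Unset Printing Implicit Defensive.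
Local Open Scope nat_scope.

Lemma seq_count (a b : nat -> nat) n :
  (forall i, i.+2 < n -> a i.+1 <= b i + b i.+2) -> (forall i, a i <= 1) ->
  \sum_(i < n) a i <= 2 + 2 * \sum_(i < n) b i.
Proof.
move=> H1 H2; case: n H1 => [|[|m]] H1.
- by rewrite big_ord0.
- by rewrite big_ord_recl big_ord0 addn0 (leq_trans (H2 _)) // leq_addr.
rewrite big_ord_recl big_ord_recr /=.
have E1 : \sum_(i < m) a (lift ord0 (widen_ord (leqnSn m) i)) <= \sum_(i < m) (b i + b i.+2).
  by apply: leq_sum => i _ /=; apply: H1; rewrite !ltnS.
rewrite big_split /= in E1.
have E2 : \sum_(i < m) b i <= \sum_(i < m.+2) b i.
  rewrite big_ord_recr big_ord_recr /= -addnA.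
  rewrite (eq_bigr (fun i : 'I_m => b i)) //. exact: leq_addr.
have E3 : \sum_(i < m) b i.+2 <= \sum_(i < m.+2) b i.
  by rewrite big_ord_recl big_ord_recl /= addnA leq_addl.
have F2 := H2 0; have F1 : a (bump 0 m) <= 1 := H2 _.
apply: leq_trans (leq_add F2 (leq_add E1 F1)) _. have ar : forall x y z, x <= z -> y <= z -> 1 + (x + y + 1) <= 2 + 2 * z by move=> *; lia.
exact: ar E2 E3.
Qed.

Lemma comp_bound (U : finType) (e : rel U) (S : {set U}) (s : seq U) (x0 : U) :
  symmetric e -> uniq s ->
  (forall i, i.+1 < size s -> e (nth x0 s i) (nth x0 s i.+1)) ->
  \sum_(x in [set x in s]) (x \in S :\: TS S e)
    <= 2 + 2 * \sum_(x in [set x in s]) (x \notin S).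
Proof.
move=> esym us He.
have E (F : U -> nat) : \sum_(x in [set x in s]) F x = \sum_(i < size s) F (nth x0 s i).
  rewrite (eq_bigl (fun x => x \in s)); last by move=> x; rewrite inE.
  by rewrite -big_uniq // (big_nth x0) big_mkord.
rewrite !E. apply: (@seq_count (fun i => nat_of_bool (nth x0 s i \in S :\: TS S e))
                              (fun i => nat_of_bool (nth x0 s i \notin S))); last first.
  by move=> i; apply: leq_b1.
move=> i hi.
case: (boolP (nth x0 s i \in S)) => Si; last first.
  by apply: leq_trans (leq_b1 _) (leq_addr _ _).
case: (boolP (nth x0 s i.+2 \in S)) => Si2; last first.
  by apply: leq_trans (leq_b1 _) (leq_addl _ _).
rewrite /= addn0 leqn0 eqb0 in_setD negb_and negbK orbC.
case Sx: (nth x0 s i.+1 \in S) => //=.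
rewrite /TS inE Sx /=.
have H1 : i < size s by lia.
have H2 : i.+2 < size s by lia.
apply: leq_trans (subset_leq_card (_ : [set nth x0 s i; nth x0 s i.+2] \subset _)).
  by rewrite cards2 nth_uniq //; case: eqP => //; lia.
apply/subsetP => y; rewrite !inE => /orP[/eqP->|/eqP->].
  by rewrite Si esym He //; lia.
by rewrite Si2 He.
Qed.

Lemma consec_nth (U : finType) (s t : seq U) x0 i : i.+1 < size s ->
  (forall j, j < size s -> nth x0 t j = nth x0 s j) -> size s <= size t ->
  consec t (nth x0 s i) (nth x0 s i.+1).
Proof.
move=> hi Hst hst; apply/hasP; exists i.
  by rewrite mem_iota add0n; lia.
have h1 : i < size t by lia.
have h2 : i.+1 < size t by lia.
rewrite (set_nth_default x0 _ h1) (set_nth_default x0 _ h2) !Hst //; last by lia.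
by rewrite !eqxx.
Qed.

Lemma sum_in (U : finType) (A B : {set U}) : A \subset B ->
  \sum_(x in B) (x \in A) = #|A|.
Proof.
move=> sAB; rewrite -sum1_card [RHS]big_mkcond [LHS]big_mkcond; apply: eq_bigr => x _.
case: (boolP (x \in A)) => xA; first by rewrite (subsetP sAB _ xA).
by case: (x \in B).
Qed.

Lemma det (U : finType) (V S : {set U}) (e : rel U) : S \subset V ->
  is_graph_on V e ->
  (forall C, C \in components V e -> is_path_comp e C \/ is_cycle_comp e C) ->
  3 * #|S| <= 2 * #|V| + 2 * ncomp V e + #|TS S e|.
Proof.
move=> sSV [eirr esym eV] Hc.
have csym := sym_connect_sym esym.
have eqi : {in V & &, equivalence_rel (connect e)}.
  move=> x y z _ _ _; split => [|cxy]; first exact: connect0.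
  apply/idP/idP => h; last exact: connect_trans cxy h.
  by apply: connect_trans h; rewrite csym.
have part := equivalence_partitionP eqi.
pose f x := nat_of_bool (x \in S :\: TS S e).
pose g x := nat_of_bool (x \notin S).
have HF : \sum_(x in V) f x <= 2 * ncomp V e + 2 * \sum_(x in V) g x.
  rewrite (set_partition_big _ part) (set_partition_big _ part) /=.
  rewrite /ncomp -sum1_card big_distrr /= big_distrr /= -big_split /=.
  apply: leq_sum => C CP.
  have [x xV defC] : exists2 x, x \in V & C = [set y in V | connect e x y].
    by case/imsetP: CP => x xV ->; exists x.
  have Hs : exists s : seq U, [/\ uniq s, C = [set x in s] &
      forall i, i.+1 < size s -> e (nth x s i) (nth x s i.+1)].
    have inC i (s : seq U) : C = [set x in s] -> i < size s -> nth x s i \in C.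
      by move=> -> hi; rewrite inE mem_nth.
    case: (Hc C CP) => [[s [us Cs He]] | [s [us s3 Cs He]]]; exists s; split => // i hi.
      rewrite He ?inC //; last by lia.
      by apply: consec_nth.
    rewrite He ?inC //; last by lia.
    apply: consec_nth => //; last by rewrite size_rcons.
    by move=> j hj; rewrite nth_rcons hj.
  case: Hs => s [us Cs He]; rewrite Cs muln1.
  exact: comp_bound esym us He.
have sTS : TS S e \subset S by apply/subsetP => y; rewrite inE => /andP[].
have pw : \sum_(x in V) (3 * (x \in S) + 2 * g x) = \sum_(x in V) (2 + (x \in TS S e) + f x).
  apply: eq_bigr => x _; rewrite /f /g in_setD.
  case: (boolP (x \in TS S e)) => xT; first by rewrite (subsetP sTS _ xT).
  by case: (x \in S).
have e1 : \sum_(x in V) (3 * (x \in S) + 2 * g x) = 3 * #|S| + 2 * \sum_(x in V) g x.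
  by rewrite big_split -!big_distrr sum_in.
have e2 : \sum_(x in V) (2 + (x \in TS S e) + f x) = 2 * #|V| + #|TS S e| + \sum_(x in V) f x.
  by rewrite !big_split sum_nat_const sum_in ?(subset_trans sTS sSV) // mulnC.
rewrite e1 e2 in pw.
have ar : forall a b c d k F : nat, a + b = c + d + F -> F <= k + b -> a <= c + k + d.
  by move=> *; lia.
apply: ar pw _.
by rewrite /ncomp; exact: HF.
Qed.
Local Open Scope ring_scope.

Lemma Ex_card (R : realFieldType) (U Om : finType) (P : Om -> R) (A : Om -> {set U}) :
  Ex P (fun w => #|A w|%:R) = \sum_I Pr P (fun w => I \in A w).
Proof.
rewrite /Ex /Pr.
transitivity (\sum_w \sum_I (if I \in A w then P w else 0)).
  apply: eq_bigr => w _; rewrite -sum1_card big_mkcond natr_sum mulr_sumr.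
  by apply: eq_bigr => I _; case: (I \in A w); rewrite ?mulr1 ?mulr0.
by rewrite exchange_big /=; apply: eq_bigr => I _; rewrite [RHS]big_mkcond.
Qed.

Unset Implicit Arguments.
Theorem lemma4p13 (R : realFieldType) (U Om : finType) (P : Om -> R)
  (V S : Om -> {set U}) (E : Om -> rel U) (p : R) :
  is_prob P ->
  2 / 3 < p ->
  (forall w, S w \subset V w) ->
  (forall I : U, p * Pr P (fun w => I \in V w)
                 <= Pr P (fun w => (I \in S w) && (I \in V w))) ->
  (forall w, is_graph_on (V w) (E w)) ->
  (forall w, forall C, C \in components (V w) (E w) ->
       is_path_comp (E w) C \/ is_cycle_comp (E w) C) ->
  Ex P (fun w => #|V w|%:R)
    <= (2 * Ex P (fun w => (ncomp (V w) (E w))%:R)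
        + Ex P (fun w => #|TS (S w) (E w)|%:R)) / (3 * p - 2).
Proof.
move=> [P0 P1] hp sSV HI Hg Hc.
have h1 : p * Ex P (fun w => #|V w|%:R) <= Ex P (fun w => #|S w|%:R).
  rewrite !Ex_card mulr_sumr; apply: ler_sum => I _.
  apply: le_trans (HI I) _; rewrite le_eqVlt; apply/orP; left; apply/eqP.
  by apply: eq_bigl => w; case: (boolP (I \in S w)) => // /(subsetP (sSV w)) ->.
have h2 : 3 * Ex P (fun w => #|S w|%:R) <= 2 * Ex P (fun w => #|V w|%:R)
     + 2 * Ex P (fun w => (ncomp (V w) (E w))%:R) + Ex P (fun w => #|TS (S w) (E w)|%:R).
  rewrite /Ex !mulr_sumr -!big_split /=; apply: ler_sum => w _.
  rewrite mulrCA -[_ * (_ * _%:R)]mulrCA -[_ * (_ * (ncomp _ _)%:R)]mulrCA -!mulrDr.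
  apply: ler_wpM2l => //.
  move: (det (sSV w) (Hg w) (Hc w)); rewrite -(ler_nat R) !natrD => h.
  lra.
have hz : 0 < 3 * p - 2 by lra.
rewrite ler_pdivlMr //.
have -> : Ex P (fun w => #|V w|%:R) * (3 * p - 2) =
   3 * (p * Ex P (fun w => #|V w|%:R)) - 2 * Ex P (fun w => #|V w|%:R) by ring.
lra.
Qed.
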